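(* Let $n,N\ge 1$, let $A_0,\dots,A_N\in\mathbb{C}^{n\times n}$, $u_0\in\mathbb{C}^n$, and let $c_0(t),c_1(t),\dots$ be the Taylor coefficients in $\varepsilon$ of $u(t,\varepsilon)=\exp(tA(\varepsilon))u_0$. Then for every integer $m\ge 1$ and every $t\in\mathbb{R}$, $$\mathrm{vec}(c_0(t),\dots,c_{m-1}(t))=\exp(tL_m)\,\widetilde u_0,\qquad \widetilde u_0:=\begin{bmatrix}u_0\\0\\\vdots\\0\end{bmatrix}\in\mathbb{C}^{mn}.$$ Equivalently, the vector $\mathrm{vec}(c_0(t),\dots,c_{m-1}(t))$ solves the linear ODE $\frac{d}{dt}v=L_mv$, $v(0)=\widetilde u_0$.
   Context: $A(\varepsilon):=A_0+\varepsilon A_1+\cdots+\varepsilon^NA_N$. Since $\varepsilon\mapsto\exp(tA(\varepsilon))u_0$ is entire, write $u(t,\varepsilon)=\exp(tA(\varepsilon))u_0=\sum_{\ell=0}^\infty\varepsilon^\ell c_\ell(t)$ with $c_\ell(t)\in\mathbb{C}^n$. For vectors $x_1,\dots,x_k\in\mathbb{C}^n$, $\mathrm{vec}(x_1,\dots,x_k)$ denotes the stacked vector $[x_1^T,\dots,x_k^T]^T\in\mathbb{C}^{nk}$. For $m\ge1$, $L_m\in\mathbb{C}^{mn\times mn}$ is the lower block-triangular block-Toeplitz matrix with $n\times n$ blocks whose $(r,s)$ block ($1\le r,s\le m$) equals $A_{r-s}$ if $0\le r-s\le \min(m-1,N)$ and $0$ otherwise; equivalently $L_m=\sum_{i=0}^{\min(m-1,N)}S_m^i\otimes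 A_i$ with $S_m=\sum_{\ell=1}^{m-1}e_{\ell+1}e_\ell^T\in\mathbb{R}^{m\times m}$. *)

(* Defs.v *)
From Stdlib Require Import Reals ClassicalEpsilon Arith.
Open Scope R_scope.

Record Cx := mkC { Re : R; Im : R }.
Definition C0 : Cx := mkC 0 0.
Definition C1 : Cx := mkC 1 0.
Definition RtoC (r : R) : Cx := mkC r 0.
Definition Cadd (a b : Cx) : Cx := mkC (Re a + Re b) (Im a + Im b).
Definition Cmul (a b : Cx) : Cx :=
  mkC (Re a * Re b - Im a * Im b) (Re a * Im b + Im a * Re b).
Fixpoint Cpow (z : Cx) (k : nat) : Cx :=
  match k with O => C1 | S k => Cmul (Cpow z k) z end.
Fixpoint Csum (f : nat -> Cx) (K : nat) : Cx :=
  match K with O => C0 | S K => Cadd (Csum f K) (f K) end.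

Definition Ccv (u : nat -> Cx) (l : Cx) : Prop :=
  Un_cv (fun k => Re (u k)) (Re l) /\ Un_cv (fun k => Im (u k)) (Im l).

(* d x d matrices / vectors of length d: only indices < d are meaningful *)
Definition mat := nat -> nat -> Cx.
Definition vec := nat -> Cx.

Definition mmul (d : nat) (A B : mat) : mat :=
  fun i j => Csum (fun k => Cmul (A i k) (B k j)) d.
Definition mid : mat := fun i j => if Nat.eqb i j then C1 else C0.
Fixpoint mpow (d : nat) (A : mat) (k : nat) : mat :=
  match k with O => mid | S k => mmul d (mpow d A k) A end.
Definition mscale (z : Cx) (A : mat) : mat := fun i j => Cmul z (A i j).
Definition mvmul (d : nat) (M : mat) (v : vec) : vec :=
  fun i => Csum (fun k => Cmul (M i k) (v k)) d.

Definition exp_partial (d : nat) (M : mat) (K : nat) : mat :=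
  fun i j => Csum (fun k => Cmul (RtoC (/ INR (fact k))) (mpow d M k i j)) K.
Definition is_mexp (d : nat) (M E : mat) : Prop :=
  forall i j, (i < d)%nat -> (j < d)%nat -> Ccv (fun K => exp_partial d M K i j) (E i j).
Definition mexp (d : nat) (M : mat) : mat :=
  epsilon (inhabits (fun _ _ => C0)) (is_mexp d M).

Definition Apoly (N : nat) (As : nat -> mat) (eps : Cx) : mat :=
  fun r s => Csum (fun i => Cmul (Cpow eps i) (As i r s)) (S N).

(* L_m as an (m n) x (m n) matrix (blocks indexed from 0): the entry at
   global position (p, q) lies in block (p / n, q / n) at local position
   (p mod n, q mod n); the block (r, s) is A_{r-s} if 0 <= r-s <= N, else 0
   (r - s <= m-1 holds automatically for p, q < m n). *)
Definition Lmat (n N : nat) (As : nat -> mat) : mat :=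
  fun p q =>
    let r := (p / n)%nat in let s := (q / n)%nat in
    if andb (Nat.leb s r) (Nat.leb (r - s) N)
    then As (r - s)%nat (p mod n)%nat (q mod n)%nat else C0.

(* vec(c_0, ..., c_{m-1}) : entry p < m n is (c_{p / n})_{p mod n} *)
Definition stackv (n : nat) (c : nat -> vec) : vec :=
  fun p => c (p / n)%nat (p mod n)%nat.

Definition u0tilde (n : nat) (u0 : vec) : vec :=
  fun p => if Nat.ltb p n then u0 p else C0.

(* Main.v *)
Require Import Defs.
From Stdlib Require Import Reals ClassicalEpsilon Arith Lra Lia Psatz Ring.
Open Scope R_scope.
Notation C0 := Defs.C0.
Notation C1 := Defs.C1.

Definition Copp (a : Cx) : Cx := mkC (- Re a) (- Im a).
Definition Csub (a b : Cx) : Cx := Cadd a (Copp b).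

Lemma Cx_eq : forall a b : Cx, Re a = Re b -> Im a = Im b -> a = b.
Proof. intros [a1 a2] [b1 b2]; simpl; intros -> ->; reflexivity. Qed.

Lemma Cx_ring : ring_theory C0 C1 Cadd Cmul Csub Copp (@eq Cx).
Proof.
  constructor; intros; apply Cx_eq; simpl; ring.
Qed.
Add Ring CxRing : Cx_ring.

Lemma Csum_ext : forall f g K, (forall k, (k < K)%nat -> f k = g k) -> Csum f K = Csum g K.
Proof.
  intros f g K; induction K; intros H; simpl; auto.
  rewrite IHK by (intros; apply H; lia). rewrite H by lia. auto.
Qed.

Lemma Csum_add : forall f g K, Csum (fun k => Cadd (f k) (g k)) K = Cadd (Csum f K) (Csum g K).
Proof. intros f g K; induction K; simpl. apply Cx_eq; simpl; ring. rewrite IHK; ring. Qed.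

Lemma Csum_mul_l : forall a f K, Csum (fun k => Cmul a (f k)) K = Cmul a (Csum f K).
Proof. intros a f K; induction K; simpl. apply Cx_eq; simpl; ring. rewrite IHK; ring. Qed.

Lemma Csum_mul_r : forall a f K, Csum (fun k => Cmul (f k) a) K = Cmul (Csum f K) a.
Proof. intros a f K; induction K; simpl. apply Cx_eq; simpl; ring. rewrite IHK; ring. Qed.

Lemma Csum_zero : forall f K, (forall k, (k < K)%nat -> f k = C0) -> Csum f K = C0.
Proof. intros f K; induction K; intros H; simpl; auto.
  rewrite IHK by (intros; apply H; lia). rewrite H by lia. ring. Qed.

Lemma Csum_swap : forall (f : nat -> nat -> Cx) I J,
  Csum (fun i => Csum (fun j => f i j) J) I = Csum (fun j => Csum (fun i => f i j) I) J.
Proof.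
  intros f I; induction I; intros J; simpl.
  - symmetry; apply Csum_zero; auto.
  - rewrite IHI. rewrite <- Csum_add. reflexivity.
Qed.

Lemma Csum_plus : forall f a b, Csum f (a + b) = Cadd (Csum f a) (Csum (fun j => f (a + j)%nat) b).
Proof.
  intros f a b; induction b; simpl.
  - rewrite Nat.add_0_r. apply Cx_eq; simpl; ring.
  - rewrite Nat.add_succ_r; simpl. rewrite IHb. ring.
Qed.

Lemma Csum_tail0 : forall f a b, (a <= b)%nat -> (forall k, (a <= k < b)%nat -> f k = C0) ->
  Csum f b = Csum f a.
Proof.
  intros f a b Hab H. replace b with (a + (b - a))%nat by lia.
  rewrite Csum_plus. rewrite (Csum_zero (fun j => f (a + j)%nat)). ring. intros; apply H; lia.
Qed.

Lemma Csum_S : forall f K, Csum f (S K) = Cadd (Csum f K) (f K).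
Proof. reflexivity. Qed.

Lemma Csum_triangle : forall (f : nat -> nat -> Cx) D,
  Csum (fun l => Csum (fun s => f l s) (S l)) D =
  Csum (fun s => Csum (fun j => f (s + j)%nat s) (D - s)) D.
Proof.
  intros f D; induction D.
  - reflexivity.
  - rewrite Csum_S, IHD. rewrite (Csum_S (fun s => Csum (fun j => f (s + j)%nat s) (S D - s))).
    replace (S D - D)%nat with 1%nat by lia. simpl (Csum _ 1).
    rewrite Nat.add_0_r.
    rewrite (Csum_S (fun s => f D s)).
    replace (Csum (fun s => Csum (fun j => f (s + j)%nat s) (S D - s)) D) with
      (Csum (fun s => Cadd (Csum (fun j => f (s + j)%nat s) (D - s)) (f D s)) D).
    + rewrite Csum_add. change (Csum (f D) D) with (Csum (fun s => f D s) D). ring.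
    + apply Csum_ext. intros k Hk.
      replace (S D - k)%nat with (S (D - k)) by lia. rewrite Csum_S. do 2 f_equal. lia.
Qed.

Lemma Csum_split : forall f m n, Csum f (m * n) = Csum (fun s => Csum (fun r => f (s * n + r)%nat) n) m.
Proof.
  intros f m n; induction m; simpl; auto.
  replace (n + m * n)%nat with (m * n + n)%nat by lia.
  rewrite Csum_plus, IHm. reflexivity.
Qed.

Lemma mvmul_mmul : forall d A B v i, mvmul d (mmul d A B) v i = mvmul d A (mvmul d B v) i.
Proof.
  intros. unfold mvmul, mmul.
  transitivity (Csum (fun k => Csum (fun q => Cmul (Cmul (A i q) (B q k)) (v k)) d) d).
  - apply Csum_ext; intros. rewrite <- Csum_mul_r. reflexivity.
  - rewrite Csum_swap. apply Csum_ext; intros. rewrite <- Csum_mul_l.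
    apply Csum_ext; intros. ring.
Qed.

Lemma mvmul_mid : forall d v i, (i < d)%nat -> mvmul d mid v i = v i.
Proof.
  intros d v i Hi. unfold mvmul.
  replace d with (S i + (d - S i))%nat by lia.
  rewrite Csum_plus. rewrite (Csum_zero (fun k => Cmul (mid i (S i + k)%nat) (v (S i + k)%nat))).
  2: { intros k Hk. unfold mid. destruct (Nat.eqb_spec i (S i + k)); [lia|]. ring. }
  rewrite Csum_S. rewrite (Csum_zero (fun k => Cmul (mid i k) (v k))).
  2: { intros k Hk. unfold mid. destruct (Nat.eqb_spec i k); [lia|]. ring. }
  unfold mid. rewrite Nat.eqb_refl. unfold C1. apply Cx_eq; simpl; ring.
Qed.

Lemma mpow_iter : forall d M k v i, (i < d)%nat ->
  mvmul d (mpow d M k) v i = Nat.iter k (mvmul d M) v i.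
Proof.
  intros d M k; induction k; intros v i Hi.
  - simpl. apply mvmul_mid; auto.
  - simpl mpow. rewrite mvmul_mmul. rewrite IHk by auto.
    rewrite Nat.iter_succ_r. reflexivity.
Qed.

Lemma mvmul_exp_partial : forall d M K v i,
  mvmul d (exp_partial d M K) v i =
  Csum (fun k => Cmul (RtoC (/ INR (fact k))) (mvmul d (mpow d M k) v i)) K.
Proof.
  intros. unfold mvmul, exp_partial.
  transitivity (Csum (fun q => Csum (fun k => Cmul (Cmul (RtoC (/ INR (fact k))) (mpow d M k i q)) (v q)) K) d).
  - apply Csum_ext; intros. rewrite Csum_mul_r. reflexivity.
  - rewrite Csum_swap. apply Csum_ext; intros. rewrite <- Csum_mul_l.
    apply Csum_ext; intros. ring.
Qed.

Definition nC (z : Cx) : R := Rabs (Re z) + Rabs (Im z).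
Fixpoint Rsum (f : nat -> R) (K : nat) : R :=
  match K with O => 0 | S K => Rsum f K + f K end.

Lemma nC_ge0 : forall z, 0 <= nC z.
Proof. intros; unfold nC; pose proof (Rabs_pos (Re z)); pose proof (Rabs_pos (Im z)); lra. Qed.

Lemma nC_add : forall a b, nC (Cadd a b) <= nC a + nC b.
Proof. intros; unfold nC; simpl.
  pose proof (Rabs_triang (Re a) (Re b)); pose proof (Rabs_triang (Im a) (Im b)); lra. Qed.

Lemma nC_mul : forall a b, nC (Cmul a b) <= nC a * nC b.
Proof. intros; unfold nC; simpl.
  pose proof (Rabs_triang (Re a * Re b) (- (Im a * Im b))).
  pose proof (Rabs_triang (Re a * Im b) (Im a * Re b)).
  rewrite Rabs_Ropp in H. rewrite !Rabs_mult in H, H0.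
  replace (Re a * Re b - Im a * Im b) with (Re a * Re b + - (Im a * Im b)) by ring.
  pose proof (Rabs_pos (Re a)); pose proof (Rabs_pos (Re b));
  pose proof (Rabs_pos (Im a)); pose proof (Rabs_pos (Im b)). nra. Qed.

Lemma Re_le_nC : forall z, Rabs (Re z) <= nC z.
Proof. intros; unfold nC; pose proof (Rabs_pos (Im z)); lra. Qed.
Lemma Im_le_nC : forall z, Rabs (Im z) <= nC z.
Proof. intros; unfold nC; pose proof (Rabs_pos (Re z)); lra. Qed.

Lemma Re_Csum : forall f K, Re (Csum f K) = Rsum (fun k => Re (f k)) K.
Proof. intros f K; induction K; simpl; auto. rewrite IHK; auto. Qed.
Lemma Im_Csum : forall f K, Im (Csum f K) = Rsum (fun k => Im (f k)) K.
Proof. intros f K; induction K; simpl; auto. rewrite IHK; auto. Qed.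

Lemma Rsum_le : forall f g K, (forall k, (k < K)%nat -> f k <= g k) -> Rsum f K <= Rsum g K.
Proof. intros f g K; induction K; intros H; simpl. lra.
  pose proof (H K ltac:(lia)). pose proof (IHK ltac:(intros; apply H; lia)). lra. Qed.

Lemma Rsum_ge0 : forall f K, (forall k, (k < K)%nat -> 0 <= f k) -> 0 <= Rsum f K.
Proof. intros f K; induction K; intros H; simpl. lra.
  pose proof (H K ltac:(lia)). pose proof (IHK ltac:(intros; apply H; lia)). lra. Qed.

Lemma Rsum_const : forall c K, Rsum (fun _ => c) K = INR K * c.
Proof. intros c K; induction K; simpl Rsum. simpl; ring. rewrite IHK, S_INR; ring. Qed.

Lemma Rsum_mul_l : forall a f K, Rsum (fun k => a * f k) K = a * Rsum f K.
Proof. intros a f K; induction K; simpl. ring. rewrite IHK; ring. Qed.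

Lemma Rsum_ext : forall f g K, (forall k, (k < K)%nat -> f k = g k) -> Rsum f K = Rsum g K.
Proof. intros f g K; induction K; intros H; simpl; auto.
  rewrite IHK by (intros; apply H; lia). rewrite H by lia. auto. Qed.

Lemma Rsum_term : forall f K k, (forall q, (q < K)%nat -> 0 <= f q) -> (k < K)%nat -> f k <= Rsum f K.
Proof. intros f K; induction K; intros k H Hk. lia. simpl.
  destruct (Nat.eq_dec k K). subst. pose proof (Rsum_ge0 f K ltac:(intros; apply H; lia)). lra.
  pose proof (IHK k ltac:(intros; apply H; lia) ltac:(lia)). pose proof (H K ltac:(lia)). lra. Qed.

Lemma nC_Csum : forall f K, nC (Csum f K) <= Rsum (fun k => nC (f k)) K.
Proof. intros f K; induction K; simpl. unfold nC; simpl; rewrite Rabs_R0; lra.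
  pose proof (nC_add (Csum f K) (f K)). lra. Qed.

Lemma Un_cv_const : forall c, Un_cv (fun _ => c) c.
Proof. intros c e He. exists O. intros. unfold Rdist. replace (c - c) with 0 by ring. rewrite Rabs_R0; lra. Qed.

Lemma Un_cv_ext : forall u v l, (forall K, u K = v K) -> Un_cv u l -> Un_cv v l.
Proof. intros u v l H Hu e He. destruct (Hu e He) as [N0 HN]. exists N0. intros. rewrite <- H. auto. Qed.

Lemma Ccv_ext : forall u v l, (forall K, u K = v K) -> Ccv u l -> Ccv v l.
Proof. intros u v l H [H1 H2]. split; eapply Un_cv_ext; eauto; intros; simpl; rewrite H; auto. Qed.

Lemma Ccv_add : forall u v a b, Ccv u a -> Ccv v b -> Ccv (fun K => Cadd (u K) (v K)) (Cadd a b).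
Proof. intros u v a b [H1 H2] [H3 H4]. split; simpl.
  apply (CV_plus _ _ _ _ H1 H3). apply (CV_plus _ _ _ _ H2 H4). Qed.

Lemma Ccv_mul_l : forall c u a, Ccv u a -> Ccv (fun K => Cmul c (u K)) (Cmul c a).
Proof. intros c u a [H1 H2]. split; simpl.
  - apply CV_minus; apply CV_mult; auto; apply Un_cv_const.
  - apply CV_plus; apply CV_mult; auto; apply Un_cv_const. Qed.

Lemma Ccv_mul_r : forall c u a, Ccv u a -> Ccv (fun K => Cmul (u K) c) (Cmul a c).
Proof. intros c u a H. eapply Ccv_ext. 2: { rewrite (ltac:(ring) : Cmul a c = Cmul c a). apply (Ccv_mul_l c u a H). }
  intros; simpl; ring. Qed.

Lemma Ccv_const : forall c, Ccv (fun _ => c) c.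
Proof. intros; split; apply Un_cv_const. Qed.

Lemma Ccv_Csum : forall (u : nat -> nat -> Cx) (l : nat -> Cx) Q,
  (forall q, (q < Q)%nat -> Ccv (fun K => u K q) (l q)) ->
  Ccv (fun K => Csum (fun q => u K q) Q) (Csum l Q).
Proof. intros u l Q; induction Q; intros H; simpl.
  - apply Ccv_const.
  - apply Ccv_add. apply IHQ; intros; apply H; lia. apply H; lia. Qed.

Lemma Ccv_unique : forall u a b, Ccv u a -> Ccv u b -> a = b.
Proof. intros u a b [H1 H2] [H3 H4]. apply Cx_eq. eapply UL_sequence; eauto. eapply UL_sequence; eauto. Qed.

Lemma Ccv_opp : forall u a, Ccv u a -> Ccv (fun K => Copp (u K)) (Copp a).
Proof. intros u a H. replace (Copp a) with (Cmul (Copp C1) a) by ring.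
  eapply Ccv_ext. 2: apply (Ccv_mul_l (Copp C1) u a H).
  intros; simpl; ring. Qed.

Lemma Rsum_diff_bound : forall a b n k, (forall q, Rabs (a q) <= b q) ->
  Rabs (Rsum a (n + k) - Rsum a n) <= Rsum b (n + k) - Rsum b n.
Proof. intros a b n k H; induction k.
  - rewrite Nat.add_0_r. replace (Rsum a n - Rsum a n) with 0 by ring. rewrite Rabs_R0; lra.
  - rewrite Nat.add_succ_r; simpl.
    replace (Rsum a (n + k) + a (n + k)%nat - Rsum a n) with ((Rsum a (n + k) - Rsum a n) + a (n+k)%nat) by ring.
    pose proof (Rabs_triang (Rsum a (n + k) - Rsum a n) (a (n+k)%nat)). pose proof (H (n+k)%nat). lra.
Qed.

Lemma series_conv : forall a b, (forall k, Rabs (a k) <= b k) -> (exists l, Un_cv (Rsum b) l) ->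
  exists l, Un_cv (Rsum a) l.
Proof.
  intros a b H [l Hl].
  assert (Cb : Cauchy_crit (Rsum b)) by (apply CV_Cauchy; exists l; auto).
  assert (Ca : Cauchy_crit (Rsum a)).
  { intros e He. destruct (Cb e He) as [N0 HN]. exists N0. intros p q Hp Hq.
    unfold Rdist in *.
    destruct (le_lt_dec p q).
    - replace q with (p + (q - p))%nat by lia.
      pose proof (Rsum_diff_bound a b p (q - p) H). pose proof (HN (p + (q-p))%nat p ltac:(lia) Hp).
      rewrite Rabs_minus_sym. eapply Rle_lt_trans. apply H0.
      eapply Rle_lt_trans. apply Rle_abs. auto.
    - replace p with (q + (p - q))%nat by lia.
      pose proof (Rsum_diff_bound a b q (p - q) H). pose proof (HN (q + (p-q))%nat q ltac:(lia) Hq).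
      eapply Rle_lt_trans. apply H0.
      eapply Rle_lt_trans. apply Rle_abs. auto. }
  destruct (R_complete _ Ca) as [la Hla]. exists la; auto.
Qed.

Lemma lim_le : forall u l c N0, Un_cv u l -> (forall n, (N0 <= n)%nat -> u n <= c) -> l <= c.
Proof. intros u l c N0 Hu H. destruct (Rle_or_lt l c); auto.
  destruct (Hu (l - c) ltac:(lra)) as [N1 HN]. pose proof (HN (max N0 N1) ltac:(lia)).
  pose proof (H (max N0 N1) ltac:(lia)). unfold Rdist in H1.
  pose proof (Rle_abs (u (max N0 N1) - l)). rewrite Rabs_minus_sym in H1.
  pose proof (Rle_abs (l - u (max N0 N1))). lra. Qed.

Lemma lim_ge : forall u l c N0, Un_cv u l -> (forall n, (N0 <= n)%nat -> c <= u n) -> c <= l.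
Proof. intros u l c N0 Hu H. destruct (Rle_or_lt c l); auto.
  destruct (Hu (c - l) ltac:(lra)) as [N1 HN]. pose proof (HN (max N0 N1) ltac:(lia)).
  pose proof (H (max N0 N1) ltac:(lia)). unfold Rdist in H1.
  pose proof (Rle_abs (u (max N0 N1) - l)). lra. Qed.

Lemma lim_abs_le : forall u l c N0, Un_cv u l -> (forall n, (N0 <= n)%nat -> Rabs (u n) <= c) -> Rabs l <= c.
Proof. intros u l c N0 Hu H. apply Rabs_le. split.
  - apply (lim_ge u l (-c) N0 Hu). intros n Hn. pose proof (H n Hn).
    pose proof (Rle_abs (- u n)). rewrite Rabs_Ropp in H1. lra.
  - apply (lim_le u l c N0 Hu). intros n Hn. pose proof (H n Hn). pose proof (Rle_abs (u n)). lra. Qed.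

Lemma Rsum_sum_f : forall s n, Rsum s (S n) = sum_f_R0 s n.
Proof. intros s n; induction n; simpl. ring. simpl in IHn. rewrite <- IHn. simpl. ring. Qed.

Lemma Rsum_le_lim : forall b l K, (forall k, 0 <= b k) -> Un_cv (Rsum b) l -> Rsum b K <= l.
Proof. intros b l K Hb Hl. apply (lim_ge _ _ _ K Hl). intros n Hn.
  replace n with (K + (n - K))%nat by lia. generalize (n - K)%nat. intros j; induction j.
  rewrite Nat.add_0_r; lra. rewrite Nat.add_succ_r; simpl. pose proof (Hb (K+j)%nat); lra. Qed.

Lemma exp_series : forall g, exists l, Un_cv (Rsum (fun k => / INR (fact k) * g ^ k)) l.
Proof. intros g. destruct (exist_exp g) as [l Hl]. exists l.
  apply (CV_shift _ 1). intros e He. destruct (Hl e He) as [N0 HN]. exists N0. intros n Hn.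
  replace (n + 1)%nat with (S n) by lia. rewrite Rsum_sum_f. apply HN; auto. Qed.

Definition mnorm (d : nat) (M : mat) : R := Rsum (fun i => Rsum (fun j => nC (M i j)) d) d.

Lemma mnorm_entry : forall d M i j, (i < d)%nat -> (j < d)%nat -> nC (M i j) <= mnorm d M.
Proof. intros. unfold mnorm.
  eapply Rle_trans. 2: apply (Rsum_term (fun i => Rsum (fun j => nC (M i j)) d) d i); auto.
  apply (Rsum_term (fun j => nC (M i j)) d j); auto. intros; apply nC_ge0.
  intros; apply Rsum_ge0; intros; apply nC_ge0. Qed.

Lemma mnorm_ge0 : forall d M, 0 <= mnorm d M.
Proof. intros; unfold mnorm; apply Rsum_ge0; intros; apply Rsum_ge0; intros; apply nC_ge0. Qed.

Lemma mpow_bound : forall d M k i j, (i < d)%nat -> (j < d)%nat ->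
  nC (mpow d M k i j) <= (INR d * mnorm d M) ^ k.
Proof.
  intros d M k; induction k; intros i j Hi Hj.
  - simpl. unfold mid. destruct (i =? j); unfold nC; simpl; rewrite ?Rabs_R0, ?Rabs_R1; lra.
  - simpl mpow. unfold mmul. eapply Rle_trans. apply nC_Csum.
    eapply Rle_trans. apply (Rsum_le _ (fun _ => (INR d * mnorm d M) ^ k * mnorm d M)).
    + intros q Hq. eapply Rle_trans. apply nC_mul. apply Rmult_le_compat; try apply nC_ge0.
      apply IHk; auto. apply mnorm_entry; auto.
    + rewrite Rsum_const. simpl. lra.
Qed.

Lemma exp_partial_cv : forall d M i j, (i < d)%nat -> (j < d)%nat ->
  exists E, Ccv (fun K => exp_partial d M K i j) E.
Proof.
  intros d M i j Hi Hj.
  set (g := INR d * mnorm d M).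
  assert (Hb : forall k, nC (Cmul (RtoC (/ INR (fact k))) (mpow d M k i j)) <= / INR (fact k) * g ^ k).
  { intros k. eapply Rle_trans. apply nC_mul. apply Rmult_le_compat; try apply nC_ge0.
    unfold nC, RtoC; simpl. rewrite Rabs_R0, Rabs_right. lra.
    apply Rle_ge, Rlt_le, Rinv_0_lt_compat, lt_0_INR, lt_O_fact.
    apply mpow_bound; auto. }
  destruct (series_conv (fun k => Re (Cmul (RtoC (/ INR (fact k))) (mpow d M k i j)))
     (fun k => / INR (fact k) * g ^ k)) as [l1 H1].
  { intros; eapply Rle_trans. apply Re_le_nC. apply Hb. } apply exp_series.
  destruct (series_conv (fun k => Im (Cmul (RtoC (/ INR (fact k))) (mpow d M k i j)))
     (fun k => / INR (fact k) * g ^ k)) as [l2 H2].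
  { intros; eapply Rle_trans. apply Im_le_nC. apply Hb. } apply exp_series.
  exists (mkC l1 l2). split; simpl.
  - eapply Un_cv_ext. 2: apply H1. intros K. unfold exp_partial. rewrite Re_Csum. auto.
  - eapply Un_cv_ext. 2: apply H2. intros K. unfold exp_partial. rewrite Im_Csum. auto.
Qed.

Lemma mexp_spec : forall d M, is_mexp d M (mexp d M).
Proof.
  intros d M. unfold mexp. apply epsilon_spec.
  exists (fun i j => epsilon (inhabits C0) (fun E => (i < d)%nat -> (j < d)%nat -> Ccv (fun K => exp_partial d M K i j) E)).
  intros i j Hi Hj.
  apply (epsilon_spec (inhabits C0) (fun E => (i < d)%nat -> (j < d)%nat -> Ccv (fun K => exp_partial d M K i j) E)); auto.
  destruct (exp_partial_cv d M i j Hi Hj) as [E HE]. exists E; auto.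
Qed.

Lemma mexp_apply : forall d M v i, (i < d)%nat ->
  Ccv (fun K => Csum (fun k => Cmul (RtoC (/ INR (fact k))) (Nat.iter k (mvmul d M) v i)) K)
      (mvmul d (mexp d M) v i).
Proof.
  intros d M v i Hi.
  eapply Ccv_ext.
  2: { unfold mvmul. apply (Ccv_Csum (fun K q => Cmul (exp_partial d M K i q) (v q))).
       intros q Hq. apply Ccv_mul_r. apply mexp_spec; auto. }
  intros K. simpl. fold (mvmul d (exp_partial d M K) v i). rewrite mvmul_exp_partial.
  apply Csum_ext. intros k _. rewrite mpow_iter; auto.
Qed.

Fixpoint wc (n N : nat) (As : nat -> mat) (t : R) (u0 : vec) (k : nat) : nat -> nat -> Cx :=
  match k with
  | O => fun l i => if Nat.eqb l 0 then u0 i else C0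
  | S k => fun l i => Csum (fun s => Csum (fun r =>
        Cmul (Cmul (RtoC t) (if andb (Nat.leb s l) (Nat.leb (l - s) N) then As (l - s)%nat i r else C0))
             (wc n N As t u0 k s r)) n) (S l)
  end.

Lemma wc_S : forall n N As t u0 k l i, wc n N As t u0 (S k) l i =
  Csum (fun s => Csum (fun r =>
        Cmul (Cmul (RtoC t) (if andb (Nat.leb s l) (Nat.leb (l - s) N) then As (l - s)%nat i r else C0))
             (wc n N As t u0 k s r)) n) (S l).
Proof. reflexivity. Qed.

Lemma divmod_eq : forall n l i, (i < n)%nat -> ((l * n + i) / n = l /\ (l * n + i) mod n = i)%nat.
Proof. intros. split.
  - symmetry. apply (Nat.div_unique _ _ _ i); auto. lia.
  - symmetry. apply (Nat.mod_unique _ _ l); auto. lia. Qed.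

Lemma claim2 : forall n N As t u0 m k l i, (l < m)%nat -> (i < n)%nat ->
  Nat.iter k (mvmul (m * n) (mscale (RtoC t) (Lmat n N As))) (u0tilde n u0) (l * n + i)%nat
  = wc n N As t u0 k l i.
Proof.
  intros n N As t u0 m k; induction k; intros l i Hl Hi.
  - simpl. unfold u0tilde. destruct l.
    + simpl. destruct (Nat.ltb_spec i n); [auto|lia].
    + simpl. destruct (Nat.ltb_spec (n + l * n + i) n); [lia|auto].
  - rewrite Nat.iter_succ. unfold mvmul at 1. rewrite Csum_split.
    rewrite wc_S.
    rewrite (Csum_tail0 _ (S l) m).
    2: lia.
    2: { intros s Hs; apply Csum_zero; intros r Hr;
      unfold mscale, Lmat; destruct (divmod_eq n l i Hi) as [-> ->];
      destruct (divmod_eq n s r Hr) as [-> ->];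
      destruct (Nat.leb_spec s l); [lia|]; simpl; ring. }
    apply Csum_ext. intros s Hs. apply Csum_ext. intros r Hr.
    rewrite IHk by lia. unfold mscale, Lmat.
    destruct (divmod_eq n l i Hi) as [-> ->]. destruct (divmod_eq n s r Hr) as [-> ->].
    reflexivity.
Qed.

Lemma wc_support : forall n N As t u0 k l i, (k * N < l)%nat -> wc n N As t u0 k l i = C0.
Proof.
  intros n N As t u0 k; induction k; intros l i H.
  - simpl. destruct l; [lia|reflexivity].
  - rewrite wc_S. apply Csum_zero. intros s Hs. apply Csum_zero. intros r Hr.
    destruct (Nat.leb_spec s l); destruct (Nat.leb_spec (l - s) N); simpl;
      try (rewrite IHk by lia); ring.
Qed.

Lemma Cpow_add : forall e a b, Cpow e (a + b) = Cmul (Cpow e a) (Cpow e b).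
Proof. intros e a b; induction b; simpl. rewrite Nat.add_0_r. unfold C1; apply Cx_eq; simpl; ring.
  rewrite Nat.add_succ_r; simpl. rewrite IHb. ring. Qed.

Lemma Csum_prod : forall f g J S, Cmul (Csum f J) (Csum g S) = Csum (fun j => Csum (fun s => Cmul (f j) (g s)) S) J.
Proof. intros. rewrite <- Csum_mul_r. apply Csum_ext; intros. rewrite Csum_mul_l. reflexivity. Qed.

Lemma Csum_sandwich : forall a F J Z, Cmul (Cmul a (Csum F J)) Z = Csum (fun j => Cmul (Cmul a (F j)) Z) J.
Proof. intros. rewrite <- Csum_mul_l, <- Csum_mul_r. reflexivity. Qed.

Lemma claim1 : forall n N As t u0 eps k i D, (i < n)%nat -> (k * N + 1 <= D)%nat ->
  Nat.iter k (mvmul n (mscale (RtoC t) (Apoly N As eps))) u0 i =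
  Csum (fun l => Cmul (Cpow eps l) (wc n N As t u0 k l i)) D.
Proof.
  intros n N As t u0 eps k; induction k; intros i D Hi HD.
  - simpl. rewrite (Csum_tail0 _ 1 D); auto.
    + simpl. unfold C1. apply Cx_eq; simpl; ring.
    + intros q Hq. destruct q; [lia|]. simpl. ring.
  - rewrite Nat.iter_succ. unfold mvmul at 1.
    set (D0 := (k * N + 1)%nat).
    transitivity (Csum (fun s => Csum (fun j => Csum (fun r =>
        Cmul (Cmul (Cpow eps s) (Cpow eps j)) (Cmul (Cmul (RtoC t) (As j i r)) (wc n N As t u0 k s r))) n) (S N)) D0).
    + transitivity (Csum (fun r => Csum (fun j => Csum (fun s =>
        Cmul (Cmul (Cpow eps s) (Cpow eps j)) (Cmul (Cmul (RtoC t) (As j i r)) (wc n N As t u0 k s r))) D0) (S N)) n).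
      * apply Csum_ext. intros r Hr. rewrite (IHk r D0) by (auto; lia).
        unfold mscale, Apoly. rewrite <- Csum_mul_l. rewrite (Csum_swap _ (S N) D0).
        apply Csum_ext; intros s _. rewrite Csum_sandwich. apply Csum_ext; intros j _. ring.
      * transitivity (Csum (fun r => Csum (fun s => Csum (fun j =>
          Cmul (Cmul (Cpow eps s) (Cpow eps j)) (Cmul (Cmul (RtoC t) (As j i r)) (wc n N As t u0 k s r))) (S N)) D0) n).
        { apply Csum_ext; intros r _. apply Csum_swap. }
        rewrite Csum_swap. apply Csum_ext; intros s _. apply Csum_swap.
    +
      symmetry.
      transitivity (Csum (fun l => Csum (fun s => Cmul (Cpow eps l) (Csum (fun r =>
        Cmul (Cmul (RtoC t) (if andb (Nat.leb s l) (Nat.leb (l - s) N) then As (l - s)%nat i r else C0))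
             (wc n N As t u0 k s r)) n)) (S l)) D).
      { apply Csum_ext; intros l _. rewrite wc_S. rewrite Csum_mul_l. reflexivity. }
      rewrite Csum_triangle.
      rewrite (Csum_tail0 _ D0 D).
      2: lia.
      2: { intros s Hs. apply Csum_zero. intros j _. rewrite Csum_zero. ring.
           intros r _. rewrite wc_support by lia. ring. }
      apply Csum_ext. intros s Hs.
      rewrite (Csum_tail0 _ (S N) (D - s)).
      2: lia.
      2: { intros j Hj. destruct (Nat.leb_spec s (s + j)); destruct (Nat.leb_spec (s + j - s) N); try lia;
           simpl; rewrite Csum_zero; try ring; intros; ring. }
      apply Csum_ext. intros j Hj.
      destruct (Nat.leb_spec s (s + j)); [|lia]. destruct (Nat.leb_spec (s + j - s) N); [|lia].
      simpl. replace (s + j - s)%nat with j by lia. rewrite Cpow_add. rewrite <- Csum_mul_l.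
      apply Csum_ext; intros r _. ring.
Qed.

Lemma pow_anti : forall x p q, 0 <= x <= 1 -> (p <= q)%nat -> x ^ q <= x ^ p.
Proof. intros x p q Hx Hpq. replace q with (p + (q - p))%nat by lia.
  generalize (q - p)%nat. intros k. induction k.
  - rewrite Nat.add_0_r; lra.
  - rewrite Nat.add_succ_r. simpl. pose proof (pow_le x (p + k) ltac:(lra)). nra. Qed.

Lemma seq_bound : forall u L, Un_cv u L -> exists B, forall n, Rabs (u n) <= B.
Proof. intros u L H. destruct (H 1 ltac:(lra)) as [N0 HN].
  exists (Rabs L + 1 + Rsum (fun k => Rabs (u k)) N0). intros n.
  pose proof (Rsum_ge0 (fun k => Rabs (u k)) N0 ltac:(intros; apply Rabs_pos)).
  destruct (le_lt_dec N0 n).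
  - pose proof (HN n ltac:(lia)). unfold Rdist in H1.
    pose proof (Rabs_triang (u n - L) L). replace (u n - L + L) with (u n) in H2 by ring. lra.
  - pose proof (Rsum_term (fun k => Rabs (u k)) N0 n ltac:(intros; apply Rabs_pos) l). simpl in H1.
    pose proof (Rabs_pos L). lra. Qed.

Lemma term_bound : forall b L, Un_cv (Rsum b) L -> exists B, forall l, Rabs (b l) <= B.
Proof. intros b L H. destruct (seq_bound _ _ H) as [B HB]. exists (2 * B). intros l.
  replace (b l) with (Rsum b (S l) - Rsum b l) by (simpl; ring).
  pose proof (Rabs_triang (Rsum b (S l)) (- Rsum b l)). rewrite Rabs_Ropp in H0.
  pose proof (HB (S l)); pose proof (HB l). unfold Rminus. lra. Qed.

Lemma geom_half : forall K, Rsum (fun l => (/2) ^ l) K = 2 - 2 * (/2) ^ K.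
Proof. intros K; induction K; simpl Rsum. simpl; ring. rewrite IHK. simpl. field. Qed.

Lemma RU_step : forall (a : nat -> R) (m j : nat) (C B : R),
  (forall l, Rabs (a l) <= B * (/2) ^ l) ->
  (forall x, 0 < x <= 1 -> exists S, Un_cv (Rsum (fun l => x ^ l * a l)) S /\ Rabs S <= C * x ^ m) ->
  (j < m)%nat -> (forall l, (l < j)%nat -> a l = 0) -> a j = 0.
Proof.
  intros a m j C B HB HS Hj Hlow.
  assert (B0 : 0 <= B). { pose proof (HB O). pose proof (Rabs_pos (a O)). simpl in H. lra. }
  set (E := Rabs C + 2 * B).
  assert (Hx : forall x, 0 < x <= 1 -> Rabs (a j) <= E * x).
  { intros x Hx. destruct (HS x Hx) as [Sx [HSc HSb]].
    assert (Hpart : forall K, Rabs (Rsum (fun l => x ^ l * a l) K - (if Nat.ltb j K then x ^ j * a j else 0))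
                     <= B * x ^ (S j) * Rsum (fun l => (/2) ^ l) K).
    { intros K; induction K.
      - simpl. replace (0 - 0) with 0 by ring. rewrite Rabs_R0. lra.
      - simpl Rsum.
        assert (Hp : 0 <= (/2) ^ K) by (apply pow_le; lra).
        destruct (lt_eq_lt_dec K j) as [[Hlt|Heq]|Hgt].
        + rewrite Hlow by auto. destruct (Nat.ltb_spec j K); [lia|]. destruct (Nat.ltb_spec j (S K)); [lia|].
          replace (Rsum (fun l => x ^ l * a l) K + x ^ K * 0 - 0) with (Rsum (fun l => x ^ l * a l) K - 0) by ring.
          pose proof (pow_le x (S j) ltac:(lra)).
          assert (0 <= B * x ^ S j * (/2) ^ K) by (apply Rmult_le_pos; [apply Rmult_le_pos|]; lra). lra.
        + subst K. destruct (Nat.ltb_spec j j); [lia|]. destruct (Nat.ltb_spec j (S j)); [|lia].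
          replace (Rsum (fun l => x ^ l * a l) j + x ^ j * a j - x ^ j * a j) with (Rsum (fun l => x ^ l * a l) j - 0) by ring.
          pose proof (pow_le x (S j) ltac:(lra)).
          assert (0 <= B * x ^ S j * (/2) ^ j) by (apply Rmult_le_pos; [apply Rmult_le_pos|]; lra). lra.
        + destruct (Nat.ltb_spec j K); [|lia]. destruct (Nat.ltb_spec j (S K)); [|lia].
          replace (Rsum (fun l => x ^ l * a l) K + x ^ K * a K - x ^ j * a j)
            with ((Rsum (fun l => x ^ l * a l) K - x ^ j * a j) + x ^ K * a K) by ring.
          eapply Rle_trans. apply Rabs_triang.
          assert (Rabs (x ^ K * a K) <= B * x ^ S j * (/2) ^ K).
          { rewrite Rabs_mult. rewrite Rabs_right by (apply Rle_ge, pow_le; lra).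
            pose proof (pow_anti x (S j) K ltac:(lra) ltac:(lia)). pose proof (HB K).
            pose proof (pow_le x K ltac:(lra)). pose proof (Rabs_pos (a K)). nra. }
          lra. }
    assert (Hlim : Rabs (Sx - x ^ j * a j) <= 2 * B * x ^ (S j)).
    { apply (lim_abs_le (fun K => Rsum (fun l => x ^ l * a l) K - x ^ j * a j) _ _ (S j)).
      - apply CV_minus; auto. apply Un_cv_const.
      - intros K HK. pose proof (Hpart K). destruct (Nat.ltb_spec j K); [|lia].
        rewrite geom_half in H. pose proof (pow_le (/2) K ltac:(lra)).
        pose proof (pow_le x (S j) ltac:(lra)).
        assert (0 <= B * x ^ S j * (2 * (/2) ^ K)) by (apply Rmult_le_pos; [apply Rmult_le_pos|]; lra). lra. }
    pose proof (Rabs_triang (Sx - x ^ j * a j) (- Sx)). rewrite Rabs_Ropp in H.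
    replace (Sx - x ^ j * a j + - Sx) with (- (x ^ j * a j)) in H by ring. rewrite Rabs_Ropp in H.
    rewrite Rabs_mult in H. rewrite Rabs_right in H by (apply Rle_ge, pow_le; lra).
    pose proof (pow_anti x (S j) m ltac:(lra) ltac:(lia)).
    pose proof (pow_le x m ltac:(lra)). pose proof (Rle_abs C).
    assert (Rabs Sx <= Rabs C * x ^ S j).
    { pose proof (Rmult_le_compat_r (x ^ m) _ _ H1 H2).
      pose proof (Rmult_le_compat_l (Rabs C) _ _ (Rabs_pos C) H0). lra. }
    assert (x ^ j * Rabs (a j) <= x ^ j * (E * x)).
    { replace (x ^ j * (E * x)) with (E * x ^ S j) by (simpl; ring). unfold E. lra. }
    assert (0 < x ^ j) by (apply pow_lt; lra).
    apply (Rmult_le_reg_l (x ^ j)); auto. }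
  destruct (Req_dec (a j) 0) as [|Hne]; auto. exfalso.
  assert (Ha : 0 < Rabs (a j)) by (apply Rabs_pos_lt; auto).
  assert (E0 : 0 <= E) by (unfold E; pose proof (Rabs_pos C); lra).
  set (x := Rmin 1 (Rabs (a j) / (2 * E + 2))).
  assert (Hx1 : 0 < x <= 1).
  { unfold x. split. apply Rmin_glb_lt. lra. apply Rdiv_lt_0_compat; lra. apply Rmin_l. }
  pose proof (Hx x Hx1).
  assert (x <= Rabs (a j) / (2 * E + 2)) by apply Rmin_r.
  assert (E * x <= E * (Rabs (a j) / (2 * E + 2))) by (apply Rmult_le_compat_l; lra).
  assert (E * (Rabs (a j) / (2 * E + 2)) < Rabs (a j)).
  { unfold Rdiv. apply (Rmult_lt_reg_r (2 * E + 2)). lra. field_simplify; nra. }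
  lra.
Qed.

Lemma RU : forall (a : nat -> R) (m : nat) (C : R),
  (exists L, Un_cv (Rsum (fun l => 2 ^ l * a l)) L) ->
  (forall x, 0 < x <= 1 -> exists S, Un_cv (Rsum (fun l => x ^ l * a l)) S /\ Rabs S <= C * x ^ m) ->
  forall j, (j < m)%nat -> a j = 0.
Proof.
  intros a m C [L HL] HS.
  destruct (term_bound _ _ HL) as [B HB].
  assert (HB' : forall l, Rabs (a l) <= B * (/2) ^ l).
  { intros l. pose proof (HB l). rewrite Rabs_mult in H. rewrite Rabs_right in H by (apply Rle_ge, pow_le; lra).
    assert (0 < 2 ^ l) by (apply pow_lt; lra).
    replace (Rabs (a l)) with ((2 ^ l * Rabs (a l)) * (/2) ^ l).
    apply Rmult_le_compat_r. apply pow_le; lra. auto.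
    rewrite pow_inv. field. lra. }
  assert (forall j, (j <= m)%nat -> forall l, (l < j)%nat -> a l = 0).
  { intros j; induction j; intros Hj l Hl. lia.
    destruct (Nat.eq_dec l j). subst. apply (RU_step a m j C B HB' HS). lia. apply IHj. lia.
    apply IHj; lia. }
  intros j Hj. apply (H (S j)); lia.
Qed.

Definition rf (k : nat) : Cx := RtoC (/ INR (fact k)).

Lemma rf_pos : forall k, 0 <= / INR (fact k).
Proof. intros. apply Rlt_le, Rinv_0_lt_compat, lt_0_INR, lt_O_fact. Qed.

Lemma Cpow_RtoC : forall x l, Cpow (RtoC x) l = RtoC (x ^ l).
Proof. intros x l; induction l; simpl. reflexivity. rewrite IHl. apply Cx_eq; simpl; ring. Qed.

Lemma nC_RtoC : forall x, nC (RtoC x) = Rabs x.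
Proof. intros; unfold nC, RtoC; simpl. rewrite Rabs_R0; ring. Qed.

Lemma cmp : forall n N As t u0 k l i,
  let w' := wc n N (fun j i r => RtoC (nC (As j i r))) (Rabs t) (fun r => RtoC (nC (u0 r))) in
  Im (w' k l i) = 0 /\ 0 <= Re (w' k l i) /\ nC (wc n N As t u0 k l i) <= Re (w' k l i).
Proof.
  intros n N As t u0 k. subst; simpl. induction k; intros l i.
  - simpl. destruct (l =? 0); simpl.
    + split; auto. split. apply nC_ge0. lra.
    + unfold nC; simpl. rewrite Rabs_R0. lra.
  - rewrite !wc_S. rewrite Re_Csum, Im_Csum. split; [|split].
    + rewrite (Rsum_ext _ (fun _ => 0)). rewrite Rsum_const; ring.
      intros s _. rewrite Im_Csum. rewrite (Rsum_ext _ (fun _ => 0)). rewrite Rsum_const; ring.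
      intros r _. destruct (IHk s r) as [H1 _]. simpl. rewrite H1.
      destruct (_ && _)%bool; simpl; ring.
    + apply Rsum_ge0. intros s _. rewrite Re_Csum. apply Rsum_ge0. intros r _.
      destruct (IHk s r) as [H1 [H2 _]]. simpl. rewrite H1.
      pose proof (Rabs_pos t).
      destruct (_ && _)%bool; simpl.
      * pose proof (nC_ge0 (As (l - s)%nat i r)). replace (Rabs t * nC (As (l - s)%nat i r) - 0 * 0) with (Rabs t * nC (As (l - s)%nat i r)) by ring.
        replace (Rabs t * 0 + 0 * nC (As (l - s)%nat i r)) with 0 by ring.
        apply Rle_trans with ((Rabs t * nC (As (l - s)%nat i r)) * Re (wc n N (fun j i r => RtoC (nC (As j i r))) (Rabs t) (fun r => RtoC (nC (u0 r))) k s r)).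
        apply Rmult_le_pos; [apply Rmult_le_pos|]; auto. right; ring.
      * right; ring.
    + eapply Rle_trans. apply nC_Csum. apply Rsum_le. intros s _.
      eapply Rle_trans. apply nC_Csum. rewrite Re_Csum. apply Rsum_le. intros r _.
      destruct (IHk s r) as [H1 [H2 H3]].
      eapply Rle_trans. apply nC_mul. eapply Rle_trans.
      apply Rmult_le_compat_l. apply nC_ge0. apply H3.
      eapply Rle_trans. apply Rmult_le_compat_r. auto. apply nC_mul.
      rewrite nC_RtoC. simpl. rewrite H1.
      destruct (_ && _)%bool; simpl.
      * right; ring.
      * unfold nC; simpl; rewrite Rabs_R0. right; ring.
Qed.

Definition Tseq n N As t u0 m i0 x K :=
  Csum (fun k => Cmul (rf k) (Csum (fun j => Cmul (Cpow (RtoC x) (m + j)) (wc n N As t u0 k (m + j)%nat i0)) (k * N + 1))) K.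

Lemma Re_rf_mul : forall k z, Re (Cmul (rf k) z) = / INR (fact k) * Re z.
Proof. intros; unfold rf, RtoC; simpl; ring. Qed.

Lemma T_bound : forall n N As t u0 m i0, (i0 < n)%nat ->
  exists Cst, forall x K, 0 <= x <= 1 -> nC (Tseq n N As t u0 m i0 x K) <= x ^ m * Cst.
Proof.
  intros n N As t u0 m i0 Hi0.
  set (As' := fun j i r => RtoC (nC (As j i r))).
  set (u0' := fun r => RtoC (nC (u0 r))).
  set (w' := wc n N As' (Rabs t) u0').
  set (B' := mscale (RtoC (Rabs t)) (Apoly N As' (RtoC 1))).
  set (V := fun k => Nat.iter k (mvmul n B') u0' i0).
  assert (HV : forall k, Rsum (fun j => Re (w' k (m + j)%nat i0)) (k * N + 1) <= Re (V k)
                         /\ 0 <= Re (V k)).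
  { intros k. unfold V, B'. rewrite (claim1 n N As' (Rabs t) u0' (RtoC 1) k i0 (m + (k * N + 1))) by (auto; lia).
    rewrite Csum_plus. simpl Re. rewrite !Re_Csum.
    assert (forall l, Re (Cmul (Cpow (RtoC 1) l) (w' k l i0)) = Re (w' k l i0)).
    { intros l. rewrite Cpow_RtoC, pow1. unfold RtoC; simpl. destruct (cmp n N As t u0 k l i0) as [H1 _].
      fold As' u0' w' in H1. rewrite H1. ring. }
    rewrite (Rsum_ext (fun k0 => Re (Cmul (Cpow (RtoC 1) k0) (wc n N As' (Rabs t) u0' k k0 i0))) (fun l => Re (w' k l i0))) by (intros; apply H).
    rewrite (Rsum_ext (fun j => Re (Cmul (Cpow (RtoC 1) (m + j)) (wc n N As' (Rabs t) u0' k (m + j) i0))) (fun j => Re (w' k (m + j)%nat i0))) by (intros; apply H).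
    assert (forall l, 0 <= Re (w' k l i0)). { intros l. destruct (cmp n N As t u0 k l i0) as [_ [H2 _]]. exact H2. }
    pose proof (Rsum_ge0 (fun l => Re (w' k l i0)) m ltac:(intros; apply H0)).
    pose proof (Rsum_ge0 (fun j => Re (w' k (m + j)%nat i0)) (k * N + 1) ltac:(intros; apply H0)).
    lra. }
  pose proof (mexp_apply n B' u0' i0 Hi0) as [HRe _].
  exists (Re (mvmul n (mexp n B') u0' i0)).
  intros x K Hx.
  assert (HS : Rsum (fun k => / INR (fact k) * Re (V k)) K <= Re (mvmul n (mexp n B') u0' i0)).
  { apply Rsum_le_lim.
    - intros k. apply Rmult_le_pos. apply rf_pos. apply HV.
    - eapply Un_cv_ext. 2: apply HRe. intros K'. cbv beta. rewrite Re_Csum. apply Rsum_ext. intros k _.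
      unfold V. unfold RtoC. cbn [Re Im Cmul]. ring. }
  unfold Tseq. eapply Rle_trans. apply nC_Csum.
  eapply Rle_trans. 2: { apply Rmult_le_compat_l. apply pow_le; lra. apply HS. }
  rewrite <- Rsum_mul_l. apply Rsum_le. intros k _.
  eapply Rle_trans. apply nC_mul. unfold rf. rewrite nC_RtoC. rewrite Rabs_right by (apply Rle_ge, rf_pos).
  replace (x ^ m * (/ INR (fact k) * Re (V k))) with (/ INR (fact k) * (x ^ m * Re (V k))) by ring.
  apply Rmult_le_compat_l. apply rf_pos.
  eapply Rle_trans. apply nC_Csum.
  eapply Rle_trans. 2: { apply Rmult_le_compat_l. apply pow_le; lra. apply (proj1 (HV k)). }
  rewrite <- Rsum_mul_l. apply Rsum_le. intros j _.
  eapply Rle_trans. apply nC_mul. rewrite Cpow_RtoC, nC_RtoC. rewrite Rabs_right by (apply Rle_ge, pow_le; lra).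
  destruct (cmp n N As t u0 k (m + j)%nat i0) as [_ [H2 H3]]. fold As' u0' w' in H2, H3.
  pose proof (pow_anti x m (m + j) Hx ltac:(lia)). pose proof (pow_le x (m + j) ltac:(lra)).
  pose proof (nC_ge0 (wc n N As t u0 k (m + j) i0)).
  apply Rle_trans with (x ^ (m + j) * Re (w' k (m + j)%nat i0)).
  apply Rmult_le_compat_l; auto. apply Rmult_le_compat_r; auto.
Qed.

Lemma Ccv_eventually : forall u l N0, (forall K, (N0 <= K)%nat -> u K = l) -> Ccv u l.
Proof. intros u l N0 H. split; intros e He; exists N0; intros K HK; rewrite H by lia;
  unfold Rdist; rewrite Rminus_diag, Rabs_R0; lra. Qed.

Lemma Csum_opp : forall f K, Csum (fun k => Copp (f k)) K = Copp (Csum f K).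
Proof. intros f K; induction K; simpl. apply Cx_eq; simpl; ring. rewrite IHK; ring. Qed.

Lemma Ccv_proj_Re : forall u l, Ccv u l -> Un_cv (fun K => Re (u K)) (Re l).
Proof. intros u l [H _]; exact H. Qed.
Lemma Ccv_proj_Im : forall u l, Ccv u l -> Un_cv (fun K => Im (u K)) (Im l).
Proof. intros u l [_ H]; exact H. Qed.

Lemma RU_proj : forall (pr : Cx -> R) (dl : nat -> Cx) (m : nat) (Cst : R) (Lim : R -> Cx),
  (forall f K, pr (Csum f K) = Rsum (fun k => pr (f k)) K) ->
  (forall x z, pr (Cmul (RtoC x) z) = x * pr z) ->
  (forall u l, Ccv u l -> Un_cv (fun K => pr (u K)) (pr l)) ->
  (forall x, Ccv (fun K => Csum (fun l => Cmul (Cpow (RtoC x) l) (dl l)) K) (Lim x)) ->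
  (forall x, 0 < x <= 1 -> Rabs (pr (Lim x)) <= Cst * x ^ m) ->
  forall j, (j < m)%nat -> pr (dl j) = 0.
Proof.
  intros pr dl m Cst Lim Hsum Hmul Hcv HD Hb.
  assert (Hs : forall x, Un_cv (Rsum (fun l => x ^ l * pr (dl l))) (pr (Lim x))).
  { intros x. eapply Un_cv_ext. 2: apply (Hcv _ _ (HD x)). intros K. cbv beta. rewrite Hsum.
    apply Rsum_ext. intros l _. rewrite Cpow_RtoC, Hmul. reflexivity. }
  apply (RU (fun l => pr (dl l)) m Cst).
  - exists (pr (Lim 2)). apply Hs.
  - intros x Hx. exists (pr (Lim x)). split; auto.
Qed.

Theorem mainTheorem1 :
  forall (n N : nat) (As : nat -> mat) (u0 : vec) (c : R -> nat -> vec),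
    (1 <= n)%nat -> (1 <= N)%nat ->
    (forall (t : R) (eps : Cx) (i : nat), (i < n)%nat ->
       Ccv (fun K => Csum (fun l => Cmul (Cpow eps l) (c t l i)) K)
           (mvmul n (mexp n (mscale (RtoC t) (Apoly N As eps))) u0 i)) ->
    forall (m : nat) (t : R), (1 <= m)%nat ->
      forall p : nat, (p < m * n)%nat ->
        stackv n (c t) p =
        mvmul (m * n) (mexp (m * n) (mscale (RtoC t) (Lmat n N As)))
              (u0tilde n u0) p.
Proof.
  intros n N As u0 c Hn HN Hc m t Hm p Hp.
  set (i0 := (p mod n)%nat). set (l0 := (p / n)%nat).
  assert (Hi0 : (i0 < n)%nat) by (apply Nat.mod_upper_bound; lia).
  assert (Hl0 : (l0 < m)%nat) by (apply Nat.Div0.div_lt_upper_bound; lia).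
  assert (Hpe : p = (l0 * n + i0)%nat) by (pose proof (Nat.div_mod_eq p n); unfold l0, i0; lia).
  set (Mt := mscale (RtoC t) (Lmat n N As)).
  set (g := fun l => mvmul (m * n) (mexp (m * n) Mt) (u0tilde n u0) (l * n + i0)%nat).
  assert (G : forall l, (l < m)%nat ->
    Ccv (fun K => Csum (fun k => Cmul (rf k) (wc n N As t u0 k l i0)) K) (g l)).
  { intros l Hl. eapply Ccv_ext. 2: apply (mexp_apply (m * n) Mt (u0tilde n u0) (l * n + i0)); nia.
    intros K. apply Csum_ext. intros k _. unfold Mt. rewrite claim2 by auto. reflexivity. }
  set (P := fun x => Csum (fun l => Cmul (Cpow (RtoC x) l) (g l)) m).
  set (Fx := fun x => mvmul n (mexp n (mscale (RtoC t) (Apoly N As (RtoC x)))) u0 i0).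
  assert (HT : forall x, Ccv (fun K => Tseq n N As t u0 m i0 x K) (Cadd (Fx x) (Copp (P x)))).
  { intros x.
    pose proof (mexp_apply n (mscale (RtoC t) (Apoly N As (RtoC x))) u0 i0 Hi0) as HF.
    assert (HP : Ccv (fun K => Csum (fun l => Cmul (Cpow (RtoC x) l)
                    (Csum (fun k => Cmul (rf k) (wc n N As t u0 k l i0)) K)) m) (P x)).
    { apply (Ccv_Csum (fun K l => Cmul (Cpow (RtoC x) l) (Csum (fun k => Cmul (rf k) (wc n N As t u0 k l i0)) K))).
      intros l Hl. apply Ccv_mul_l. apply G; auto. }
    eapply Ccv_ext. 2: apply (Ccv_add _ _ _ _ HF (Ccv_opp _ _ HP)).
    intros K. cbv beta.
    assert (E : Csum (fun k => Cmul (RtoC (/ INR (fact k)))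
                  (Nat.iter k (mvmul n (mscale (RtoC t) (Apoly N As (RtoC x)))) u0 i0)) K
              = Cadd (Csum (fun l => Cmul (Cpow (RtoC x) l)
                    (Csum (fun k => Cmul (rf k) (wc n N As t u0 k l i0)) K)) m)
                     (Tseq n N As t u0 m i0 x K)).
    { unfold Tseq.
      transitivity (Csum (fun k => Cmul (rf k) (Cadd
         (Csum (fun l => Cmul (Cpow (RtoC x) l) (wc n N As t u0 k l i0)) m)
         (Csum (fun j => Cmul (Cpow (RtoC x) (m + j)) (wc n N As t u0 k (m + j)%nat i0)) (k * N + 1)))) K).
      - apply Csum_ext. intros k _. rewrite (claim1 n N As t u0 (RtoC x) k i0 (m + (k * N + 1))) by (auto; lia).
        rewrite Csum_plus. reflexivity.
      - transitivity (Csum (fun k => Cadd (Csum (fun l => Cmul (Cpow (RtoC x) l) (Cmul (rf k) (wc n N As t u0 k l i0))) m)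
           (Cmul (rf k) (Csum (fun j => Cmul (Cpow (RtoC x) (m + j)) (wc n N As t u0 k (m + j)%nat i0)) (k * N + 1)))) K).
        + apply Csum_ext. intros k _.
          rewrite (Csum_ext (fun l => Cmul (Cpow (RtoC x) l) (Cmul (rf k) (wc n N As t u0 k l i0)))
                            (fun l => Cmul (rf k) (Cmul (Cpow (RtoC x) l) (wc n N As t u0 k l i0)))) by (intros; ring).
          rewrite Csum_mul_l. ring.
        + rewrite Csum_add. f_equal. rewrite Csum_swap. apply Csum_ext. intros l _.
          rewrite Csum_mul_l. reflexivity. }
    rewrite E. ring. }
  destruct (T_bound n N As t u0 m i0 Hi0) as [Cst HCst].
  set (gext := fun l => if Nat.ltb l m then g l else C0).
  set (dl := fun l => Cadd (c t l i0) (Copp (gext l))).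
  assert (HD : forall x, Ccv (fun K => Csum (fun l => Cmul (Cpow (RtoC x) l) (dl l)) K) (Cadd (Fx x) (Copp (P x)))).
  { intros x.
    assert (HG : Ccv (fun K => Csum (fun l => Cmul (Cpow (RtoC x) l) (gext l)) K) (P x)).
    { apply (Ccv_eventually _ _ m). intros K HK. rewrite (Csum_tail0 _ m K HK).
      - apply Csum_ext. intros l Hl. unfold gext. destruct (Nat.ltb_spec l m); [reflexivity|lia].
      - intros l Hl. unfold gext. destruct (Nat.ltb_spec l m); [lia|]. ring. }
    eapply Ccv_ext. 2: apply (Ccv_add _ _ _ _ (Hc t (RtoC x) i0 Hi0) (Ccv_opp _ _ HG)).
    intros K. cbv beta. rewrite <- Csum_opp, <- Csum_add. apply Csum_ext. intros l _. unfold dl. ring. }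
  set (Lim := fun x => Cadd (Fx x) (Copp (P x))).
  assert (HBre : forall x, 0 < x <= 1 -> Rabs (Re (Lim x)) <= Cst * x ^ m).
  { intros x Hx. rewrite Rmult_comm.
    apply (lim_abs_le _ _ (x ^ m * Cst) O (Ccv_proj_Re _ _ (HT x))).
    intros; eapply Rle_trans; [apply Re_le_nC|apply HCst; lra]. }
  assert (HBim : forall x, 0 < x <= 1 -> Rabs (Im (Lim x)) <= Cst * x ^ m).
  { intros x Hx. rewrite Rmult_comm.
    apply (lim_abs_le _ _ (x ^ m * Cst) O (Ccv_proj_Im _ _ (HT x))).
    intros; eapply Rle_trans; [apply Im_le_nC|apply HCst; lra]. }
  pose proof (RU_proj Re dl m Cst Lim Re_Csum ltac:(intros; unfold RtoC; cbn; ring) Ccv_proj_Re HD HBre l0 Hl0) as Hre.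
  pose proof (RU_proj Im dl m Cst Lim Im_Csum ltac:(intros; unfold RtoC; cbn; ring) Ccv_proj_Im HD HBim l0 Hl0) as Him.
  assert (Eg : g l0 = mvmul (m * n) (mexp (m * n) Mt) (u0tilde n u0) p).
  { unfold g. rewrite <- Hpe. reflexivity. }
  rewrite <- Eg. unfold stackv. change (p / n)%nat with l0. change (p mod n)%nat with i0.
  unfold dl, gext in Hre, Him. destruct (Nat.ltb_spec l0 m); [|lia].
  cbn in Hre, Him. apply Cx_eq; lra.
Qed.
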